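(* Let $k$ be a field, $R=k[[x,y,z]]/(y^2-xz,\ x^2y-z^2,\ x^3-yz)$ (so $R\cong k[[t^3,t^4,t^5]]$), $I=(x,y)\subseteq R$, and $M=R^{\oplus 3}/\operatorname{im}(A)$ where $A=\begin{pmatrix} y & z & x^2\\ -x & -y & -z\\ z & x^2 & xy\end{pmatrix}$ acting on column vectors. Then $M$ is a torsion-free indecomposable $R$-module of rank $2$ with $\mu_R(M)=3$, $M$ is strongly self dual with respect to $I$ (so $E=\operatorname{End}_R(M)$ is a local ring carrying an $R^*$-algebra structure with $M_*\cong\operatorname{Hom}_R(M,I)$ as right $E$-modules), $M$ is a cyclic left $E$-module, and $M_*\otimes_E M$ has a nonzero torsion element.
   Context: An $R$-algebra $E$ (possibly noncommutative) is an $R^*$-algebra if there is a map of abelian groups $(-)^*:E\to E$ with $(ab)^*=b^*a^*$, $1_E^*=1_E$, $(ra)^*=ra^*$ for $r\in R$, and $a^{**}=a$ for all $a,b\in E$. $M$ is a left $\operatorname{End}_R(M)$-module via $f\cdot x=f(x)$, and $M_*$ denotes $M$ regarded as a right module via $x\cdot f=f^*(x)$. An $R$-module $M$ is strongly self dual with respect to an $R$-module $N$ if there is an $R$-module isomorphism $\alpha:M\to\operatorname{Hom}_R(M,N)$ with $\alpha(x)(y)=\alpha(y)(x)$ for all $x,y\in M$; the $R^*$-structure is $f^*=\alpha^{-1}\circ\operatorname{Hom}_R(f,N)\circ\alpha$. $\mu_R(M)$ is the minimal number of generators. *)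

(* Defs.v *)
From HB Require Import structures.
From mathcomp Require Import all_boot all_algebra.
From Stdlib Require Import ClassicalEpsilon.
Set Implicit Arguments. Unset Strict Implicit. Unset Printing Implicit Defensive.
Import GRing.Theory.
Local Open Scope ring_scope.

Definition Rlinear (R : comNzRingType) (U V : lmodType R) (f : U -> V) :=
  forall (r : R) (u v : U), f (r *: u + v) = r *: f u + f v.

Definition ideal2 (R : comNzRingType) (a b : R) (r : R) : Prop :=
  exists c d : R, r = c * a + d * b.

Definition Amat (R : comNzRingType) (x y z : R) : 'M[R]_3 :=
  \matrix_(i < 3, j < 3)
    nth 0 (nth [::] [:: [:: y; z; x ^+ 2]; [:: - x; - y; - z]; [:: z; x ^+ 2; x * y]] i) j.

Section ModuleNotions.
Variables (R : comNzRingType) (M : lmodType R).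

Definition nzd (r : R) := forall s : R, r * s = 0 -> s = 0.

Definition torsion_free := forall (r : R) (m : M), nzd r -> r *: m = 0 -> m = 0.

Definition lin_indep n (v : 'I_n -> M) :=
  forall c : 'I_n -> R, \sum_(i < n) c i *: v i = 0 -> forall i, c i = 0.

Definition has_rank (n : nat) :=
  (exists v : 'I_n -> M, lin_indep v) /\
  (forall m (v : 'I_m -> M), lin_indep v -> (m <= n)%N).

Definition generates n (v : 'I_n -> M) :=
  forall m : M, exists c : 'I_n -> R, m = \sum_(i < n) c i *: v i.

Definition min_gens (n : nat) :=
  (exists v : 'I_n -> M, generates v) /\
  (forall m (v : 'I_m -> M), generates v -> (n <= m)%N).

Definition submodule (N : M -> Prop) :=
  N 0 /\ (forall (r : R) u v, N u -> N v -> N (r *: u + v)).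

Definition indecomposable :=
  (exists m : M, m <> 0) /\
  forall N1 N2 : M -> Prop, submodule N1 -> submodule N2 ->
    (forall m, exists a b, N1 a /\ N2 b /\ m = a + b) ->
    (forall m, N1 m -> N2 m -> m = 0) ->
    (forall m, N1 m -> m = 0) \/ (forall m, N2 m -> m = 0).

Definition endo (f : M -> M) := Rlinear f.

Definition E_unit (f : M -> M) :=
  exists g, endo g /\ (forall m, f (g m) = m) /\ (forall m, g (f m) = m).

(* E is a local ring: 1 <> 0 and the sum of two non-units is a non-unit *)
Definition local_End :=
  ~ (forall m : M, m = 0) /\
  forall f g, endo f -> endo g -> ~ E_unit f -> ~ E_unit g ->
    ~ E_unit (fun m => f m + g m).

Definition cyclic_over_End := exists m0 : M, forall m, exists f, endo f /\ m = f m0.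

Section SelfDual.
Variables (I : R -> Prop) (alpha : M -> M -> R).

Definition hom_into (g : M -> R) :=
  (forall (r : R) u v, g (r *: u + v) = r * g u + g v) /\ (forall u, I (g u)).

Definition strongly_self_dual :=
  (forall x, hom_into (alpha x)) /\
  (forall (r : R) x x' y, alpha (r *: x + x') y = r * alpha x y + alpha x' y) /\
  (forall x x', (forall y, alpha x y = alpha x' y) -> x = x') /\
  (forall g, hom_into g -> exists x, forall y, g y = alpha x y) /\
  (forall x y, alpha x y = alpha y x).

(* f^* = alpha^-1 o Hom_R(f, I) o alpha *)
Definition star (f : M -> M) (x : M) : M :=
  epsilon (inhabits 0) (fun x' => forall y, alpha x' y = alpha x (f y)).

Definition Rstar_structure :=
  (forall f, endo f -> endo (star f)) /\
  (forall f g, endo f -> endo g -> forall x,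
      star (fun m => f m + g m) x = star f x + star g x) /\
  (forall f g, endo f -> endo g -> forall x, star (fun m => f (g m)) x = star g (star f x)) /\
  (forall x, star id x = x) /\
  (forall (r : R) f, endo f -> forall x, star (fun m => r *: f m) x = r *: star f x) /\
  (forall f, endo f -> forall x, star (star f) x = f x).

(* alpha : M_* -> Hom_R(M, I) is a map of right E-modules, where
   x . f = f^*(x) on M_* and g . f = g o f on Hom_R(M, I) *)
Definition right_E_iso :=
  forall f, endo f -> forall x y, alpha (star f x) y = alpha x (f y).

(* M_* (x)_E M : finite formal sums  sum_i x_i (x) m_i  (lists of pairs),
   modulo the congruence generated by biadditivity and E-balancedness
   (x . f) (x) m = x (x) (f m). *)
Inductive tequiv : seq (M * M) -> seq (M * M) -> Prop :=
| te_refl s : tequiv s s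
| te_sym s t : tequiv s t -> tequiv t s
| te_trans s t u : tequiv s t -> tequiv t u -> tequiv s u
| te_cat s1 s2 t1 t2 : tequiv s1 t1 -> tequiv s2 t2 -> tequiv (s1 ++ s2) (t1 ++ t2)
| te_comm s t : tequiv (s ++ t) (t ++ s)
| te_zero m : tequiv [:: (0, m)] [::]
| te_addl a a' m : tequiv [:: (a + a', m)] [:: (a, m); (a', m)]
| te_addr a m m' : tequiv [:: (a, m + m')] [:: (a, m); (a, m')]
| te_bal f a m : endo f -> tequiv [:: (star f a, m)] [:: (a, f m)].

Definition tscale (r : R) (s : seq (M * M)) : seq (M * M) :=
  map (fun p => (p.1, r *: p.2)) s.

Definition tensor_has_nonzero_torsion :=
  exists (s : seq (M * M)) (r : R),
    nzd r /\ tequiv (tscale r s) [::] /\ ~ tequiv s [::].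

End SelfDual.
End ModuleNotions.

(* Main.v *)
Require Import Defs.
From HB Require Import structures.
From mathcomp Require Import all_boot all_algebra.
From mathcomp Require Import ring zify.
From Stdlib Require Import ClassicalEpsilon.
Set Implicit Arguments. Unset Strict Implicit. Unset Printing Implicit Defensive.
Import GRing.Theory.
Local Open Scope ring_scope.

Module S1.

Lemma sum_delta (k : fieldType) (n j : nat) (F : nat -> k) :
  \sum_(i < n.+1) ((nat_of_ord i == j)%:R * F i) = if (j <= n)%N then F j else 0.
Proof.
case: ifP => hj.
  rewrite (bigD1 (Ordinal (hj : (j < n.+1)%N))) //= eqxx mul1r big1 ?addr0 //.
  move=> i /negbTE hi; have -> : (nat_of_ord i == j) = false.
    by apply/negbTE; apply: contraFN hi => /eqP h; apply/eqP/val_inj.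
  by rewrite mul0r.
rewrite big1 // => i _; have -> : (nat_of_ord i == j) = false.
  by apply/negbTE/eqP => h; move: (ltn_ord i); rewrite h ltnS hj.
by rewrite mul0r.
Qed.

Section Series.
Variables (k : fieldType) (R : comNzRingType) (phi : R -> nat -> k).
Hypothesis phi_add : forall a b n, phi (a + b) n = phi a n + phi b n.
Hypothesis phi_one : forall n, phi 1 n = (n == 0%N)%:R.
Hypothesis phi_mul : forall a b n,
     phi (a * b) n = \sum_(i < n.+1) phi a i * phi b (n - i)%N.
Hypothesis phi_inj : forall a b, (forall n, phi a n = phi b n) -> a = b.
Hypothesis phi_im : forall f : nat -> k,
     (exists a, forall n, phi a n = f n) <-> (f 1%N = 0 /\ f 2%N = 0).

Lemma phi0 n : phi 0 n = 0.
Proof. have := phi_add 0 0 n; rewrite addr0 => h. by apply: (addrI (phi 0 n)); rewrite addr0 -h. Qed.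

Lemma phiN a n : phi (- a) n = - phi a n.
Proof. by apply/eqP; rewrite -addr_eq0 -phi_add addNr phi0. Qed.

Lemma phiB a b n : phi (a - b) n = phi a n - phi b n.
Proof. by rewrite phi_add phiN. Qed.

Lemma phi1 a : phi a 1 = 0.
Proof. by case: (proj1 (phi_im (phi a)) (ex_intro _ a (fun n => erefl))). Qed.
Lemma phi2 a : phi a 2 = 0.
Proof. by case: (proj1 (phi_im (phi a)) (ex_intro _ a (fun n => erefl))). Qed.

Lemma phi_shift (x : R) (d : nat) (hx : forall n, phi x n = (n == d)%:R) a n :
  phi (x * a) n = if (d <= n)%N then phi a (n - d) else 0.
Proof.
rewrite phi_mul; under eq_bigr do rewrite hx.
by rewrite (sum_delta n d (fun i => phi a (n - i)%N)).
Qed.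

Definition mkR (f : nat -> k) (h1 : f 1%N = 0) (h2 : f 2%N = 0) : R :=
  proj1_sig (constructive_indefinite_description _ (proj2 (phi_im f) (conj h1 h2))).
Lemma mkRE f h1 h2 n : phi (@mkR f h1 h2) n = f n.
Proof. by rewrite /mkR; case: constructive_indefinite_description. Qed.

Lemma cst_1 (c : k) : (if (1 == 0)%N then c else 0) = 0. Proof. by []. Qed.
Lemma cst_2 (c : k) : (if (2 == 0)%N then c else 0) = 0. Proof. by []. Qed.
Definition cst (c : k) : R := @mkR (fun n => if n == 0%N then c else 0) (cst_1 c) (cst_2 c).
Lemma cstE c n : phi (cst c) n = if n == 0%N then c else 0.
Proof. by rewrite mkRE. Qed.

Lemma phi_cst_mul c a n : phi (cst c * a) n = c * phi a n.
Proof.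
rewrite phi_mul big_ord_recl /= cstE /= subn0 big1 ?addr0 // => i _.
by rewrite cstE /= mul0r.
Qed.

Lemma phi_mul0 a b : phi (a * b) 0 = phi a 0 * phi b 0.
Proof. by rewrite phi_mul big_ord_recl big_ord0 addr0. Qed.

Lemma phi_eq a b : (forall n, phi a n = phi b n) -> a = b.
Proof. exact: phi_inj. Qed.


Lemma sh_delta (d1 d2 n : nat) :
  (if (d1 <= n)%N then ((n - d1)%N == d2)%:R else 0 : k) = (n == d1 + d2)%N%:R.
Proof.
case: leqP => h.
  by congr (_%:R); apply/eqP/eqP; lia.
by have -> : (n == d1 + d2)%N = false by apply/eqP; lia.
Qed.

Fixpoint invl (r : R) (n : nat) : seq k :=
  match n with
  | 0 => [:: (phi r 0)^-1]
  | n'.+1 => let l := invl r n' in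
      rcons l (- (phi r 0)^-1 * \sum_(i < n'.+1) nth 0 l i * phi r (n'.+1 - i)%N)
  end.
Definition binv r n := nth 0 (invl r n) n.

Lemma size_invl r n : size (invl r n) = n.+1.
Proof. by elim: n => //= n IH; rewrite size_rcons IH. Qed.

Lemma nth_invl r n i : (i <= n)%N -> nth 0 (invl r n) i = binv r i.
Proof.
elim: n => [|n IH] hi; first by move: hi; rewrite leqn0 => /eqP ->.
rewrite leq_eqVlt in hi; case/orP: hi => [/eqP -> //| hi].
by rewrite /= nth_rcons size_invl hi IH.
Qed.

Lemma binvS r n : binv r n.+1 =
  - (phi r 0)^-1 * \sum_(i < n.+1) binv r i * phi r (n.+1 - i)%N.
Proof.
rewrite /binv /= nth_rcons size_invl ltnn eqxx; congr (_ * _).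
by apply: eq_bigr => i _; rewrite nth_invl // -ltnS.
Qed.

Lemma binv1 r : binv r 1 = 0.
Proof. by rewrite binvS big_ord_recl big_ord0 /= phi1 mulr0 addr0 mulr0. Qed.
Lemma binv2 r : binv r 2 = 0.
Proof. by rewrite binvS !big_ord_recl big_ord0 /= binv1 phi2 mulr0 mul0r !addr0 mulr0. Qed.

Lemma unitR r : phi r 0 != 0 -> exists s, r * s = 1.
Proof.
move=> h0; exists (mkR (binv1 r) (binv2 r)); rewrite mulrC.
apply: phi_inj => n; rewrite phi_one phi_mul.
case: n => [|n].
  by rewrite big_ord_recl big_ord0 addr0 mkRE /binv /= mulVf.
rewrite big_ord_recr /= subnn mkRE binvS mulNr.
idtac.
under eq_bigr do rewrite mkRE.
by rewrite mulNr mulrAC mulVf // mul1r subrr.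
Qed.

End Series.

End S1.
Import S1.

Module S2.
Section Rel.
Variables (k : fieldType) (R : comNzRingType) (phi : R -> nat -> k).
Hypothesis phi_add : forall a b n, phi (a + b) n = phi a n + phi b n.
Hypothesis phi_one : forall n, phi 1 n = (n == 0%N)%:R.
Hypothesis phi_mul : forall a b n,
     phi (a * b) n = \sum_(i < n.+1) phi a i * phi b (n - i)%N.
Hypothesis phi_inj : forall a b, (forall n, phi a n = phi b n) -> a = b.
Hypothesis phi_im : forall f : nat -> k,
     (exists a, forall n, phi a n = f n) <-> (f 1%N = 0 /\ f 2%N = 0).
Variables (x y z : R).
Hypothesis hx : forall n, phi x n = (n == 3%N)%:R.
Hypothesis hy : forall n, phi y n = (n == 4%N)%:R.
Hypothesis hz : forall n, phi z n = (n == 5%N)%:R.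
Let phi0 := phi0 phi_add.
Let phiN := phiN phi_add.
Let phiB := phiB phi_add.
Let phi1 := phi1 phi_im.
Let phi2 := phi2 phi_im.
Let phX := phi_shift phi_mul hx.
Let phY := phi_shift phi_mul hy.
Let phZ := phi_shift phi_mul hz.
Let shd := sh_delta k.
Let mk := mkR phi_im.
Let mkE := mkRE phi_im.
Let cst := cst phi_im.
Let cstE := cstE phi_im.



Lemma rel_yy : y * y = x * z.
Proof. apply phi_inj => n. rewrite phY phX hy hz !shd. by []. Qed.
Lemma rel_xxx : x * (x * x) = y * z.
Proof. apply phi_inj => n; rewrite phX phY phX hx hz !shd //. Qed.
Lemma rel_xxy : x * (x * y) = z * z.
Proof. apply phi_inj => n; rewrite phX phZ phX hy hz !shd //. Qed.

Lemma nzd_gen (w : R) (d : nat) (hw : forall n, phi w n = (n == d)%:R) a : w * a = 0 -> a = 0.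
Proof.
move=> h; apply phi_inj => n; have := phi_shift phi_mul hw a (n + d).
by rewrite h phi0 leq_addl addnK phi0 => ->.
Qed.

Lemma nzdx a : x * a = 0 -> a = 0. Proof. by move=> h; apply: (nzd_gen hx h). Qed.
Lemma nzdy a : y * a = 0 -> a = 0. Proof. by move=> h; apply: (nzd_gen hy h). Qed.
Lemma nzdz a : z * a = 0 -> a = 0. Proof. by move=> h; apply: (nzd_gen hz h). Qed.



Definition cut3 (r : R) (e : nat) (n : nat) : k :=
  if (n %% 3 == 0)%N then phi r (n + e) else 0.
Lemma cut3_1 r e : cut3 r e 1 = 0. Proof. reflexivity. Qed.
Lemma cut3_2 r e : cut3 r e 2 = 0. Proof. reflexivity. Qed.

Lemma mdec r : phi r 0 = 0 -> exists a b c, r = x * a + y * b + z * c.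
Proof.
move=> h0.
exists (mk (cut3_1 r 3) (cut3_2 r 3)), (mk (cut3_1 r 4) (cut3_2 r 4)),
  (mk (cut3_1 r 5) (cut3_2 r 5)).
apply phi_inj => n; rewrite !phi_add phX phY phZ !mkE /cut3.
case: (ltnP n 3) => hn.
  case: n hn => [|[|[|n]]] // _; by rewrite ?h0 ?phi1 ?phi2 /= ?addr0.
repeat case: ifP => ?; rewrite ?addr0 ?add0r; try (exfalso; lia);
  congr (phi r _); lia.
Qed.

End Rel.

End S2.
Import S2.

Module S3.
Section Mod.
Variables (k : fieldType) (R : comNzRingType) (phi : R -> nat -> k).
Hypothesis phi_add : forall a b n, phi (a + b) n = phi a n + phi b n.
Hypothesis phi_one : forall n, phi 1 n = (n == 0%N)%:R.
Hypothesis phi_mul : forall a b n,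
     phi (a * b) n = \sum_(i < n.+1) phi a i * phi b (n - i)%N.
Hypothesis phi_inj : forall a b, (forall n, phi a n = phi b n) -> a = b.
Hypothesis phi_im : forall f : nat -> k,
     (exists a, forall n, phi a n = f n) <-> (f 1%N = 0 /\ f 2%N = 0).
Variables (x y z : R).
Hypothesis hx : forall n, phi x n = (n == 3%N)%:R.
Hypothesis hy : forall n, phi y n = (n == 4%N)%:R.
Hypothesis hz : forall n, phi z n = (n == 5%N)%:R.
Let phi0 := phi0 phi_add.
Let phiN := phiN phi_add.
Let phiB := phiB phi_add.
Let phi1 := phi1 phi_im.
Let phi2 := phi2 phi_im.
Let phX := phi_shift phi_mul hx.
Let phY := phi_shift phi_mul hy.
Let phZ := phi_shift phi_mul hz.
Let shd := sh_delta k.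
Let mk := mkR phi_im.
Let mkE := mkRE phi_im.
Let cst := cst phi_im.
Let cstE := cstE phi_im.

Let rel_yy : y * y = x * z. Proof. by apply: rel_yy. Qed.
Let rel_xxx : x * (x * x) = y * z. Proof. by apply: rel_xxx. Qed.
Let rel_xxy : x * (x * y) = z * z. Proof. by apply: rel_xxy. Qed.
Let nzdx a : x * a = 0 -> a = 0. Proof. by apply: nzdx. Qed.
Let nzdy a : y * a = 0 -> a = 0. Proof. by apply: nzdy. Qed.
Let nzdz a : z * a = 0 -> a = 0. Proof. by apply: nzdz. Qed.
Let mdec r : phi r 0 = 0 -> exists a b c, r = x * a + y * b + z * c.
Proof. by apply: mdec. Qed.

Lemma by_rels (e1 e2 h1 h2 h3 : R) :
  e1 - e2 = (y*y - x*z)*h1 + (x*(x*x) - y*z)*h2 + (x*(x*y) - z*z)*h3 -> e1 = e2.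
Proof. by rewrite rel_yy rel_xxx rel_xxy !subrr !mul0r !addr0 => /eqP; rewrite subr_eq0 => /eqP. Qed.

Definition rel0 (a b c : R) := x * a + y * b = 0 /\ z * b + x * c = 0.

Lemma relK a b c : rel0 a b c -> exists u0 u1 u2,
  a = y * u0 + z * u1 + x ^+ 2 * u2 /\ b = - x * u0 - y * u1 - z * u2 /\
  c = z * u0 + x ^+ 2 * u1 + x * y * u2.
Proof.
move=> [h1 h2].
have hb0 : phi b 0 = 0.
  have := congr1 (phi^~ 4%N) h1; rewrite phi_add phX phY phi0 /= phi1 add0r.
  by [].
have [p [q [s hb]]] := mdec hb0.
exists (- p), (- q), (- s).
have hb' : b = - x * - p - y * - q - z * - s by rewrite hb; ring.
have xa : x * a = - (y * b) by apply/eqP; rewrite -subr_eq0 opprK h1.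
have xc : x * c = - (z * b) by apply/eqP; rewrite -subr_eq0 opprK addrC h2.
split; last split => //.
  apply/eqP; rewrite -subr_eq0; apply/eqP; apply: nzdx.
  apply: (@by_rels _ _ (-q) s 0). rewrite mulrBr xa hb. ring.
apply/eqP; rewrite -subr_eq0; apply/eqP; apply: nzdx.
apply: (@by_rels _ _ 0 q s). rewrite mulrBr xc hb. ring.
Qed.

Lemma rel0_const a b c : rel0 a b c -> [/\ phi a 0 = 0, phi b 0 = 0 & phi c 0 = 0].
Proof.
move=> [h1 h2].
have e3 := congr1 (phi^~ 3%N) h1; have e4 := congr1 (phi^~ 4%N) h1.
have f3 := congr1 (phi^~ 3%N) h2.
move: e3 e4 f3; rewrite /= !phi_add !phX !phY !phZ !phi0 /= phi1 !addr0 !add0r.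
by move=> -> ->.
Qed.

Variables (M : lmodType R) (pi : 'cV[R]_3 -> M).
Hypothesis pi_lin : Rlinear pi.
Hypothesis pi_surj : forall m : M, exists v, pi v = m.
Hypothesis pi_ker : forall v, pi v = 0 <-> exists u, v = Amat x y z *m u.

Definition vec3 (a b c : R) : 'cV[R]_3 := \col_i nth 0 [:: a; b; c] i.
Definition g1 := pi (vec3 1 0 0).
Definition g2 := pi (vec3 0 1 0).
Definition g3 := pi (vec3 0 0 1).
Definition cb a b c := a *: g1 + b *: g2 + c *: g3.

Lemma pi0 : pi 0 = 0.
Proof. have := pi_lin 1 0 0; rewrite !scale1r addr0 => h. by apply: (addrI (pi 0)); rewrite -h addr0. Qed.
Lemma piD u v : pi (u + v) = pi u + pi v.
Proof. by rewrite -{1}(scale1r u) pi_lin scale1r. Qed.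
Lemma piZ r u : pi (r *: u) = r *: pi u.
Proof. by rewrite -(addr0 (r *: u)) pi_lin pi0 addr0. Qed.

Lemma vec3_split a b c :
  vec3 a b c = a *: vec3 1 0 0 + b *: vec3 0 1 0 + c *: vec3 0 0 1.
Proof.
apply/matrixP => i j; rewrite !mxE.
by case: i => [[|[|[|i]]] hi] //=; rewrite ?mulr1 ?mulr0 ?addr0 ?add0r.
Qed.

Lemma pi_vec a b c : pi (vec3 a b c) = cb a b c.
Proof. by rewrite vec3_split !piD !piZ. Qed.

Lemma vecE (v : 'cV[R]_3) : v = vec3 (v 0 0) (v 1 0) (v 2 0).
Proof.
apply/matrixP => i j; rewrite !mxE (ord1 j).
by case: i => [[|[|[|i]]] hi] //=; congr (v _ _); apply: val_inj.
Qed.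

Lemma cb_surj m : exists a b c, m = cb a b c.
Proof. by have [v <-] := pi_surj m; rewrite (vecE v) pi_vec; do 3 eexists. Qed.

Lemma vec3_inj a b c a' b' c' : vec3 a b c = vec3 a' b' c' -> [/\ a = a', b = b' & c = c'].
Proof.
move=> h; have := congr1 (fun v : 'cV[R]_3 => (v 0 0, v 1 0, v 2 0)) h.
by rewrite /= !mxE /= => [[-> -> ->]].
Qed.

Lemma Amul u0 u1 u2 : Amat x y z *m vec3 u0 u1 u2 =
  vec3 (y * u0 + z * u1 + x ^+ 2 * u2) (- x * u0 - y * u1 - z * u2)
       (z * u0 + x ^+ 2 * u1 + x * y * u2).
Proof.
apply/matrixP => i j; rewrite !mxE !big_ord_recl big_ord0 !mxE /=.
case: i => [[|[|[|i]]] hi] //=; rewrite addr0 ?mulNr ?mulr1 ?mulr0 ?addr0.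
all: by rewrite !addrA.
Qed.

Lemma cb0 a b c : cb a b c = 0 <-> rel0 a b c.
Proof.
split.
  rewrite -pi_vec => /pi_ker [u hu]; move: hu; rewrite (vecE u) Amul.
  case/vec3_inj => -> -> ->; split.
    apply: (@by_rels _ _ (- u 1 0) (u 2 0) 0); ring.
  apply: (@by_rels _ _ 0 (u 1 0) (u 2 0)); ring.
move/relK => [u0 [u1 [u2 [ha [hb hc]]]]].
by rewrite -pi_vec; apply/pi_ker; exists (vec3 u0 u1 u2); rewrite Amul ha hb hc.
Qed.

Lemma cbD a b c a' b' c' : cb a b c + cb a' b' c' = cb (a + a') (b + b') (c + c').
Proof. by rewrite /cb !scalerDl [LHS]addrACA; congr (_ + _); exact: addrACA. Qed.
Lemma cbZ r a b c : r *: cb a b c = cb (r * a) (r * b) (r * c).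
Proof. by rewrite /cb !scalerDr !scalerA. Qed.
Lemma cbN a b c : - cb a b c = cb (- a) (- b) (- c).
Proof. by rewrite -scaleN1r cbZ !mulN1r. Qed.
Lemma cb_eq a b c a' b' c' : cb a b c = cb a' b' c' <-> rel0 (a - a') (b - b') (c - c').
Proof.
rewrite -cb0; have -> : cb (a - a') (b - b') (c - c') = cb a b c - cb a' b' c' by rewrite cbN cbD.
by split; [move=> ->; rewrite subrr | move/eqP; rewrite subr_eq0 => /eqP].
Qed.

End Mod.

End S3.
Import S3.

Module S4.
Lemma det33 (k : fieldType) (C : 'M[k]_3) :
  C (lift ord0 (lift ord0 ord0)) ord0 = 0 ->
  C (lift ord0 (lift ord0 ord0)) (lift ord0 ord0) = 0 ->
  C ord0 (lift ord0 ord0) = 0 ->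
  \det C = C ord0 ord0 * C (lift ord0 ord0) (lift ord0 ord0) * C (lift ord0 (lift ord0 ord0)) (lift ord0 (lift ord0 ord0)).
Proof.
move=> h1 h2 h3.
rewrite (expand_det_row _ (lift ord0 (lift ord0 ord0))) !big_ord_recl big_ord0 h1 h2 !mul0r !add0r addr0.
rewrite /cofactor (expand_det_row _ ord0) !big_ord_recl big_ord0 !mxE /=.
have e0 : lift (lift ord0 (lift ord0 ord0)) (ord0 : 'I_2) = ord0 :> 'I_3 by apply: val_inj.
have e1 : lift (lift ord0 (lift ord0 ord0)) (lift ord0 ord0 : 'I_2) = lift ord0 ord0 :> 'I_3 by apply: val_inj.
rewrite e0 e1 h3 mul0r addr0 /cofactor det_mx11 !mxE /=.
have e2 : lift (ord0 : 'I_2) (ord0 : 'I_1) = lift ord0 ord0 :> 'I_2 by apply: val_inj.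
rewrite e2 e1 /bump /=.
rewrite !exprS !expr0; ring.
Qed.

Section Main.
Variables (k : fieldType) (R : comNzRingType) (phi : R -> nat -> k).
Hypothesis phi_add : forall a b n, phi (a + b) n = phi a n + phi b n.
Hypothesis phi_one : forall n, phi 1 n = (n == 0%N)%:R.
Hypothesis phi_mul : forall a b n,
     phi (a * b) n = \sum_(i < n.+1) phi a i * phi b (n - i)%N.
Hypothesis phi_inj : forall a b, (forall n, phi a n = phi b n) -> a = b.
Hypothesis phi_im : forall f : nat -> k,
     (exists a, forall n, phi a n = f n) <-> (f 1%N = 0 /\ f 2%N = 0).
Variables (x y z : R).
Hypothesis hx : forall n, phi x n = (n == 3%N)%:R.
Hypothesis hy : forall n, phi y n = (n == 4%N)%:R.
Hypothesis hz : forall n, phi z n = (n == 5%N)%:R.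
Let phi0 := phi0 phi_add.
Let phiN := phiN phi_add.
Let phiB := phiB phi_add.
Let phi1 := phi1 phi_im.
Let phi2 := phi2 phi_im.
Let phX := phi_shift phi_mul hx.
Let phY := phi_shift phi_mul hy.
Let phZ := phi_shift phi_mul hz.
Let shd := sh_delta k.
Let mk := mkR phi_im.
Let mkE := mkRE phi_im.
Let cst := cst phi_im.
Let cstE := cstE phi_im.
Let rel_yy : y * y = x * z. Proof. by apply: rel_yy. Qed.
Let rel_xxx : x * (x * x) = y * z. Proof. by apply: rel_xxx. Qed.
Let rel_xxy : x * (x * y) = z * z. Proof. by apply: rel_xxy. Qed.
Let nzdx a : x * a = 0 -> a = 0. Proof. by apply: nzdx. Qed.
Let nzdy a : y * a = 0 -> a = 0. Proof. by apply: nzdy. Qed.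
Let nzdz a : z * a = 0 -> a = 0. Proof. by apply: nzdz. Qed.
Let mdec r : phi r 0 = 0 -> exists a b c, r = x * a + y * b + z * c.
Proof. by apply: mdec. Qed.
Let by_rels (e1 e2 h1 h2 h3 : R) :
  e1 - e2 = (y*y - x*z)*h1 + (x*(x*x) - y*z)*h2 + (x*(x*y) - z*z)*h3 -> e1 = e2.
Proof. by apply: by_rels. Qed.
Let phi_mul0 a b : phi (a * b) 0 = phi a 0 * phi b 0. Proof. by apply: phi_mul0. Qed.
Let unitR r : phi r 0 != 0 -> exists s, r * s = 1. Proof. by apply: unitR. Qed.
Local Notation rel0 := (S3.rel0 x y z).
Let rel0_const a b c : rel0 a b c -> [/\ phi a 0 = 0, phi b 0 = 0 & phi c 0 = 0].
Proof. by apply: rel0_const. Qed.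

Variables (M : lmodType R) (pi : 'cV[R]_3 -> M).
Hypothesis pi_lin : Rlinear pi.
Hypothesis pi_surj : forall m : M, exists v, pi v = m.
Hypothesis pi_ker : forall v, pi v = 0 <-> exists u, v = Amat x y z *m u.
Local Notation cb := (S3.cb pi).
Local Notation g1 := (S3.g1 pi).
Local Notation g2 := (S3.g2 pi).
Local Notation g3 := (S3.g3 pi).
Let cb0 a b c : cb a b c = 0 <-> rel0 a b c. Proof. by apply: cb0. Qed.
Let cb_eq a b c a' b' c' : cb a b c = cb a' b' c' <-> rel0 (a - a') (b - b') (c - c').
Proof. by apply: cb_eq. Qed.
Let cb_surj m : exists a b c, m = cb a b c. Proof. by apply: cb_surj. Qed.
Let cbD a b c a' b' c' : cb a b c + cb a' b' c' = cb (a + a') (b + b') (c + c').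
Proof. by apply: cbD. Qed.
Let cbZ r a b c : r *: cb a b c = cb (r * a) (r * b) (r * c). Proof. by apply: cbZ. Qed.
Let cbN a b c : - cb a b c = cb (- a) (- b) (- c). Proof. by apply: cbN. Qed.
Let pi_vec a b c : pi (vec3 a b c) = cb a b c. Proof. by apply: pi_vec. Qed.
Let piD u v : pi (u + v) = pi u + pi v. Proof. by apply: piD. Qed.
Let piZ r u : pi (r *: u) = r *: pi u. Proof. by apply: piZ. Qed.
Let pi0 : pi 0 = 0. Proof. by apply: pi0. Qed.
Let g1E : g1 = cb 1 0 0. Proof. by rewrite /cb !scale0r !addr0 scale1r. Qed.
Let g2E : g2 = cb 0 1 0. Proof. by rewrite /cb !scale0r addr0 add0r scale1r. Qed.
Let g3E : g3 = cb 0 0 1. Proof. by rewrite /cb !scale0r !add0r scale1r. Qed.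

Lemma ex3 (m : M) : exists t : R * R * R, m = cb t.1.1 t.1.2 t.2.
Proof. by have [a [b [c ->]]] := cb_surj m; exists (a, b, c). Qed.
Definition lift3 (m : M) : R * R * R :=
  proj1_sig (constructive_indefinite_description _ (ex3 m)).
Definition lA m := (lift3 m).1.1.
Definition lB m := (lift3 m).1.2.
Definition lC m := (lift3 m).2.
Lemma liftE m : m = cb (lA m) (lB m) (lC m).
Proof. by rewrite /lA /lB /lC /lift3; case: constructive_indefinite_description. Qed.

Lemma lift_cb a b c : rel0 (lA (cb a b c) - a) (lB (cb a b c) - b) (lC (cb a b c) - c).
Proof. by apply/cb_eq; rewrite -liftE. Qed.

Lemma rel0D a b c a' b' c' : rel0 a b c -> rel0 a' b' c' -> rel0 (a + a') (b + b') (c + c').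
Proof. by move=> [h1 h2] [h1' h2']; split; rewrite !mulrDr addrACA ?h1 ?h2 ?h1' ?h2' addr0. Qed.
Lemma rel0Z r a b c : rel0 a b c -> rel0 (r * a) (r * b) (r * c).
Proof. by move=> [h1 h2]; split; rewrite !mulrA ![_ * r]mulrC -!mulrA -mulrDr ?h1 ?h2 mulr0. Qed.
Lemma rel0N a b c : rel0 a b c -> rel0 (- a) (- b) (- c).
Proof. by move/(rel0Z (-1)); rewrite !mulN1r. Qed.

Definition kA m := phi (lA m) 0.
Definition kB m := phi (lB m) 0.
Definition kC m := phi (lC m) 0.
Lemma kcb a b c : [/\ kA (cb a b c) = phi a 0, kB (cb a b c) = phi b 0 & kC (cb a b c) = phi c 0].
Proof.
have [h1 h2 h3] := rel0_const (lift_cb a b c).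
by rewrite /kA /kB /kC; move: h1 h2 h3; rewrite !phiB => /eqP; rewrite subr_eq0 => /eqP -> /eqP; rewrite subr_eq0 => /eqP -> /eqP;
  rewrite subr_eq0 => /eqP ->.
Qed.

Lemma kAcb a b c : kA (cb a b c) = phi a 0. Proof. by case: (kcb a b c). Qed.
Lemma kBcb a b c : kB (cb a b c) = phi b 0. Proof. by case: (kcb a b c). Qed.
Lemma kCcb a b c : kC (cb a b c) = phi c 0. Proof. by case: (kcb a b c). Qed.
Lemma tf : torsion_free M.
Proof.
move=> r m hr; rewrite (liftE m) cbZ => /cb0 [h1 h2]; apply/cb0; split; apply: hr.
  by rewrite -h1 mulrDr !mulrA ![r * _]mulrC.
by rewrite -h2 mulrDr !mulrA ![r * _]mulrC.
Qed.

Lemma dep3 (p1 q1 p2 q2 p3 q3 : R) : exists c1 c2 c3,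
  (c1 != 0 \/ c2 != 0 \/ c3 != 0) /\ c1 * p1 + c2 * p2 + c3 * p3 = 0 /\
  c1 * q1 + c2 * q2 + c3 * q3 = 0.
Proof.
case: (eqVneq (p2 * q3 - p3 * q2) 0) => d1; last first.
  exists (p2 * q3 - p3 * q2), (p3 * q1 - p1 * q3), (p1 * q2 - p2 * q1).
  by split; [left | split; ring].
case: (eqVneq (p3 * q1 - p1 * q3) 0) => d2; last first.
  exists (p2 * q3 - p3 * q2), (p3 * q1 - p1 * q3), (p1 * q2 - p2 * q1).
  by split; [right; left | split; ring].
case: (eqVneq (p1 * q2 - p2 * q1) 0) => d3; last first.
  exists (p2 * q3 - p3 * q2), (p3 * q1 - p1 * q3), (p1 * q2 - p2 * q1).
  by split; [right; right | split; ring].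
case: (eqVneq p1 0) => h1.
  case: (eqVneq q1 0) => h2.
    exists 1, 0, 0; split; first by left; exact: oner_neq0.
    by rewrite h1 h2; split; ring.
  exists q2, (- q1), 0; split; first by right; left; rewrite oppr_eq0.
  split; last by ring.
  by transitivity (p1 * q2 - p2 * q1); [rewrite h1; ring | exact d3].
exists p2, (- p1), 0; split; first by right; left; rewrite oppr_eq0.
split; first by ring.
by transitivity (- (p1 * q2 - p2 * q1)); [ring | rewrite d3 oppr0].
Qed.

Lemma sum2 (c : 'I_2 -> R) (v : 'I_2 -> M) : \sum_(i < 2) c i *: v i = c ord0 *: v ord0 + c (lift ord0 ord0) *: v (lift ord0 ord0).
Proof. by rewrite !big_ord_recl big_ord0 addr0. Qed.

Lemma rank2 : has_rank M 2.
Proof.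
split.
  exists (fun i : 'I_2 => if i == ord0 then g1 else g3) => c.
  rewrite sum2 /= g1E g3E !cbZ cbD !mulr1 !mulr0 !addr0 => /cb0 [h1 h2].
  rewrite mulr0 addr0 in h1; rewrite mulr0 !add0r in h2.
  move/nzdx: h1 => h1; move/nzdx: h2 => h2.
  case => [[|[|i]] hi] //.
    by rewrite (_ : Ordinal hi = ord0) //; apply: val_inj.
  have -> : Ordinal hi = lift ord0 ord0 by apply: val_inj.
  exact h2.
move=> m v hv; rewrite leqNgt; apply/negP => hm.
have [m' em] : exists m', m = m'.+3 by exists (m - 3)%N; lia.
subst m.
pose c (c1 c2 c3 : R) (i : 'I_m'.+3) := if nat_of_ord i == 0%N then c1
  else if nat_of_ord i == 1%N then c2 else if nat_of_ord i == 2%N then c3 else 0.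
have hexp : forall c1 c2 c3, \sum_(i < m'.+3) c c1 c2 c3 i *: v i =
  c1 *: v ord0 + (c2 *: v (lift ord0 ord0) + c3 *: v (lift ord0 (lift ord0 ord0))).
  move=> c1 c2 c3; rewrite !big_ord_recl big1 ?addr0 //.
  by move=> i _; rewrite /c /= scale0r.
have hc1 : forall c1 c2 c3, c c1 c2 c3 ord0 = c1 by [].
have hc2 : forall c1 c2 c3, c c1 c2 c3 (lift ord0 ord0) = c2 by [].
have hc3 : forall c1 c2 c3, c c1 c2 c3 (lift ord0 (lift ord0 ord0)) = c3 by [].
move: (hv) hexp hc1 hc2 hc3.
set a2 := v (lift _ (lift _ _)); set a1 := v (lift _ _); set a0 := v ord0.
move=> {}hv hexp hc1 hc2 hc3.
pose w (m0 : M) := (x * lA m0 + y * lB m0, z * lB m0 + x * lC m0).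
have [c1 [c2 [c3 [hnz [e1 e2]]]]] := dep3 (w a0).1 (w a0).2 (w a1).1 (w a1).2 (w a2).1 (w a2).2.
have hc : \sum_(i < m'.+3) c c1 c2 c3 i *: v i = 0.
  rewrite hexp (liftE a0) (liftE a1) (liftE a2) !cbZ !cbD; apply/cb0; split.
    by rewrite -e1 /w /=; ring.
  by rewrite -e2 /w /=; ring.
have := hv _ hc; case: hnz => [h|[h|h]].
- by move=> /(_ ord0); rewrite hc1 => h'; rewrite h' eqxx in h.
- by move=> /(_ (lift ord0 ord0)); rewrite hc2 => h'; rewrite h' eqxx in h.
- by move=> /(_ (lift ord0 (lift ord0 ord0))); rewrite hc3 => h'; rewrite h' eqxx in h.
Qed.

Lemma sum_cb (I : finType) (r a b c : I -> R) :
  \sum_(j : I) r j *: cb (a j) (b j) (c j) =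
  cb (\sum_j r j * a j) (\sum_j r j * b j) (\sum_j r j * c j).
Proof.
under eq_bigr do rewrite cbZ.
by rewrite /S3.cb !big_split /= -!scaler_suml.
Qed.

Lemma phi_sum (I : finType) (F : I -> R) n : phi (\sum_j F j) n = \sum_j phi (F j) n.
Proof. exact: (big_morph (phi^~ n) (fun a b => phi_add a b n) (phi0 n)). Qed.

Definition gi (i : 'I_3) := if nat_of_ord i == 0%N then g1 else if nat_of_ord i == 1%N then g2 else g3.

Lemma sum3 (c : 'I_3 -> R) (v : 'I_3 -> M) : \sum_(i < 3) c i *: v i =
  c ord0 *: v ord0 + (c (lift ord0 ord0) *: v (lift ord0 ord0) +
  c (lift ord0 (lift ord0 ord0)) *: v (lift ord0 (lift ord0 ord0))).
Proof. by rewrite !big_ord_recl big_ord0 addr0. Qed.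

Lemma kgi e : [/\ kA (gi e) = (nat_of_ord e == 0%N)%:R, kB (gi e) = (nat_of_ord e == 1%N)%:R &
  kC (gi e) = (nat_of_ord e == 2%N)%:R].
Proof.
case: e => [[|[|[|e]]] he] //; rewrite /gi /= ?g1E ?g2E ?g3E.
- by case: (kcb 1 0 0) => -> -> ->; rewrite phi_one !phi0.
- by case: (kcb 0 1 0) => -> -> ->; rewrite phi_one !phi0.
- by case: (kcb 0 0 1) => -> -> ->; rewrite phi_one !phi0.
Qed.

Lemma mingens3 : min_gens M 3.
Proof.
split.
  exists gi => m; have [a [b [c ->]]] := cb_surj m.
  exists (fun i : 'I_3 => if nat_of_ord i == 0%N then a else if nat_of_ord i == 1%N then b else c).
  by rewrite sum3 /= /S3.cb addrA.
move=> m v hv; rewrite leqNgt; apply/negP => hm.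
have hch : forall e : 'I_3, exists c : 'I_m -> R, gi e = \sum_(j < m) c j *: v j by move=> e; exact: hv.
pose C e := proj1_sig (constructive_indefinite_description _ (hch e)).
have hC : forall e, gi e = \sum_(j < m) C e j *: v j.
  by move=> e; rewrite /C; case: constructive_indefinite_description.
pose U : 'M[k]_(3, m) := \matrix_(i, j) (if nat_of_ord i == 0%N then kA (v j)
   else if nat_of_ord i == 1%N then kB (v j) else kC (v j)).
pose Bt : 'M[k]_(m, 3) := \matrix_(j, e) phi (C e j) 0.
have hUB : U *m Bt = 1%:M.
  apply/matrixP => i e; rewrite !mxE.
  have := hC e; rewrite [X in _ = X](eq_bigr (fun j => C e j *: cb (lA (v j)) (lB (v j)) (lC (v j)))); last by move=> j _; rewrite -liftE.
  rewrite sum_cb => he.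
  have [ha hb hc] := kcb (\sum_j C e j * lA (v j)) (\sum_j C e j * lB (v j)) (\sum_j C e j * lC (v j)).
  rewrite -he !phi_sum in ha hb hc.
  under eq_bigr do rewrite !mxE.
  have oE : forall (j : nat) (hj : (j < 3)%N), (Ordinal hj == e) = (nat_of_ord e == j).
    by move=> j hj; apply/eqP/eqP => [<-|h] //; apply: val_inj.
  case: i => [[|[|[|i]]] hi] //=; rewrite oE.
  - rewrite (_ : \sum_j _ = kA (gi e)); last by rewrite ha; apply: eq_bigr => j _; rewrite phi_mul0 mulrC.
    by case: (kgi e).
  - rewrite (_ : \sum_j _ = kB (gi e)); last by rewrite hb; apply: eq_bigr => j _; rewrite phi_mul0 mulrC.
    by case: (kgi e).
  - rewrite (_ : \sum_j _ = kC (gi e)); last by rewrite hc; apply: eq_bigr => j _; rewrite phi_mul0 mulrC.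
    by case: (kgi e).
have := mxrankM_maxl U Bt; rewrite hUB mxrank1 => h3.
have := rank_leq_col U; lia.
Qed.

Lemma phXS a n : phi (x * a) n.+3 = phi a n.
Proof. by rewrite phX (_ : (n.+3 - 3)%N = n) //; lia. Qed.
Lemma phYS a n : phi (y * a) n.+4 = phi a n.
Proof. by rewrite phY (_ : (n.+4 - 4)%N = n) //; lia. Qed.
Lemma phZS a n : phi (z * a) n.+4.+1 = phi a n.
Proof. by rewrite phZ (_ : (n.+4.+1 - 5)%N = n) //; lia. Qed.
Lemma phXs a n : (n < 3)%N -> phi (x * a) n = 0.
Proof. by rewrite phX ltnNge => /negbTE ->. Qed.
Lemma phYs a n : (n < 4)%N -> phi (y * a) n = 0.
Proof. by rewrite phY ltnNge => /negbTE ->. Qed.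
Lemma phZs a n : (n < 5)%N -> phi (z * a) n = 0.
Proof. by rewrite phZ ltnNge => /negbTE ->. Qed.

Section Endo.
Variable f : M -> M.
Hypothesis hf : endo f.
Lemma endoD u v : f (u + v) = f u + f v.
Proof. by rewrite -(scale1r u) hf !scale1r. Qed.
Lemma endo0 : f 0 = 0.
Proof. by apply: (addrI (f 0)); rewrite -endoD !addr0. Qed.
Lemma endoZ r u : f (r *: u) = r *: f u.
Proof. by rewrite -(addr0 (r *: u)) hf endo0 addr0. Qed.
Lemma endoN u : f (- u) = - f u.
Proof. by rewrite -scaleN1r endoZ scaleN1r. Qed.
Lemma endo_cb a b c : f (cb a b c) =
  cb (a * lA (f g1) + b * lA (f g2) + c * lA (f g3))
     (a * lB (f g1) + b * lB (f g2) + c * lB (f g3))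
     (a * lC (f g1) + b * lC (f g2) + c * lC (f g3)).
Proof.
rewrite {1}/S3.cb !endoD !endoZ (liftE (f g1)) (liftE (f g2)) (liftE (f g3)).
by rewrite !cbZ !cbD -!liftE.
Qed.
Lemma endo_sum (I : finType) (F : I -> M) : f (\sum_i F i) = \sum_i f (F i).
Proof. exact: (big_morph f endoD endo0). Qed.
End Endo.

Definition eps (f : M -> M) := kC (f g3).

Lemma rel1 : cb y (- x) z = 0.
Proof. by apply/cb0; split; ring. Qed.

Lemma endo_consts f : endo f ->
  [/\ kC (f g1) = 0, kC (f g2) = 0, kA (f g2) = 0, kB (f g2) = eps f & kA (f g1) = eps f].
Proof.
move=> hf; have := congr1 f rel1; rewrite endo_cb // endo0 // => /cb0 [E1 E2].
rewrite /eps /kA /kB /kC.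
have h6 := congr1 (phi^~ 6%N) E1; have h7 := congr1 (phi^~ 7%N) E1.
have k6 := congr1 (phi^~ 6%N) E2; have k7 := congr1 (phi^~ 7%N) E2; have k8 := congr1 (phi^~ 8%N) E2.
move: h6 h7 k6 k7 k8 => /=.
rewrite !(phi_add, phiN, phi0, mulNr, phXS, phYS, phZS) ?phXs ?phYs ?phZs //.
rewrite ?phi1 ?phi2 ?oppr0 !(add0r, addr0, subr0, sub0r).
move=> /eqP; rewrite oppr_eq0 => /eqP h1 /eqP; rewrite subr_eq0 => /eqP h2 /eqP.
rewrite oppr_eq0 => /eqP h3 h4 /eqP; rewrite addrC subr_eq0 => /eqP h5.
by split => //; rewrite h5 // h2.
Qed.

Lemma kD u v : [/\ kA (u + v) = kA u + kA v, kB (u + v) = kB u + kB v & kC (u + v) = kC u + kC v].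
Proof. by rewrite (liftE u) (liftE v) cbD !kAcb !kBcb !kCcb !phi_add. Qed.
Lemma kZ r u : [/\ kA (r *: u) = phi r 0 * kA u, kB (r *: u) = phi r 0 * kB u & kC (r *: u) = phi r 0 * kC u].
Proof. by rewrite (liftE u) cbZ !kAcb !kBcb !kCcb !phi_mul0. Qed.

Lemma kC_endo f m : endo f -> kC (f m) = eps f * kC m.
Proof.
move=> hf; have [a [b [c ->]]] := cb_surj m.
rewrite endo_cb //; case: (endo_consts hf) => h1 h2 _ _ _.
rewrite !kCcb.
by rewrite !phi_add !phi_mul0; move: h1 h2; rewrite /kC /eps => -> ->; rewrite !mulr0 !add0r mulrC.
Qed.

Lemma eps_id : eps id = 1.
Proof. by rewrite /eps /= g3E kCcb phi_one. Qed.
Lemma eps_add f g : eps (fun m => f m + g m) = eps f + eps g.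
Proof. by rewrite /eps; case: (kD (f g3) (g g3)). Qed.
Lemma eps_comp f g : endo f -> eps (fun m => f (g m)) = eps f * eps g.
Proof. by move=> hf; rewrite /eps kC_endo. Qed.

Lemma endo_id : endo (id : M -> M). Proof. by []. Qed.
Lemma endo_comp (f g : M -> M) : endo f -> endo g -> endo (fun m => f (g m)).
Proof. by move=> hf hg r u v; rewrite hg hf. Qed.
Lemma endo_add (f g : M -> M) : endo f -> endo g -> endo (fun m => f m + g m).
Proof. by move=> hf hg r u v; rewrite hf hg scalerDr addrACA. Qed.
Lemma endo_scale r (f : M -> M) : endo f -> endo (fun m => r *: f m).
Proof. by move=> hf s u v; rewrite hf scalerDr !scalerA mulrC. Qed.

Lemma unit_eps f : endo f -> E_unit f -> eps f != 0.
Proof.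
move=> hf [g [hg [fg gf]]]; apply/eqP => h.
have : eps (fun m => f (g m)) = 1 by rewrite /eps fg -eps_id.
by rewrite eps_comp // h mul0r => /eqP; rewrite eq_sym oner_eq0.
Qed.

Definition col3 (m : M) : 'cV[R]_3 := vec3 (lA m) (lB m) (lC m).
Lemma pi_col3 m : pi (col3 m) = m.
Proof. by rewrite /col3 pi_vec -liftE. Qed.

Definition Bm (f : M -> M) : 'M[R]_3 := \matrix_(i, j) (col3 (f (gi j))) i 0.

Lemma Bm_vec f a b c : Bm f *m vec3 a b c =
  vec3 (a * lA (f g1) + b * lA (f g2) + c * lA (f g3))
       (a * lB (f g1) + b * lB (f g2) + c * lB (f g3))
       (a * lC (f g1) + b * lC (f g2) + c * lC (f g3)).
Proof.
apply/matrixP => i j; rewrite !mxE !big_ord_recl big_ord0 !mxE /= addr0.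
by case: i => [[|[|[|i]]] hi] //=; rewrite /gi /= ?addrA ![_ * a]mulrC ![_ * b]mulrC ![_ * c]mulrC.
Qed.

Lemma Bm_spec f : endo f -> forall v, f (pi v) = pi (Bm f *m v).
Proof. by move=> hf v; rewrite (vecE v) pi_vec endo_cb // Bm_vec pi_vec. Qed.

Lemma ker_pres f : endo f -> forall (p : {poly R}) v, pi v = 0 -> pi (horner_mx (Bm f) p *m v) = 0.
Proof.
move=> hf p; elim/poly_ind: p => [|p c IH] v hv.
  by rewrite rmorph0 mul0mx pi0.
rewrite rmorphD rmorphM /= horner_mx_X horner_mx_C mulmxDl mul_scalar_mx piD piZ hv scaler0 addr0.
by rewrite -mulmxE -mulmxA IH // -Bm_spec // hv endo0.
Qed.

Definition ev0 (r : R) : k := phi r 0.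
Lemma ev0_zmod : zmod_morphism ev0.
Proof. by move=> a b; rewrite /ev0 phiB. Qed.
HB.instance Definition _ := GRing.isZmodMorphism.Build R k ev0 ev0_zmod.
Lemma ev0_monoid : monoid_morphism ev0.
Proof. by split; [rewrite /ev0 phi_one | move=> a b; rewrite /ev0 phi_mul0]. Qed.
HB.instance Definition _ := GRing.isMonoidMorphism.Build R k ev0 ev0_monoid.

Lemma eps_unit f : endo f -> eps f != 0 -> E_unit f.
Proof.
move=> hf he.
have [c1 c2 c3 c4 c5] := endo_consts hf.
have hdet : ev0 (\det (Bm f)) = eps f ^+ 3.
  rewrite -det_map_mx det33; rewrite ?mxE /col3 /gi /= ?mxE /=.
  - by rewrite /ev0; move: c5 c4; rewrite /eps /kA /kB /kC => -> ->; rewrite !exprS expr0 mulr1 mulrA.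
  - exact: c1.
  - exact: c2.
  - exact: c3.
pose chi := char_poly (Bm f).
have hc0 : ev0 (chi`_0) != 0.
  have e3 : (-1) ^+ 3 = -1 :> R by rewrite -signr_odd /= expr1.
  rewrite /chi char_poly_det e3 /ev0 phi_mul0 phiN phi_one mulN1r.
  by move: hdet; rewrite /ev0 => ->; rewrite oppr_eq0 expf_neq0.
have [s hs] := unitR hc0.
pose Q := drop_poly 1 chi.
have hchi : chi = (chi`_0)%:P + Q * 'X.
  rewrite -[LHS](poly_take_drop 1) expr1; congr (_ + _).
  by apply/polyP => i; rewrite coef_take_poly coefC; case: i.
have CH : (chi`_0)%:M + horner_mx (Bm f) Q * Bm f = 0.
  by have := Cayley_Hamilton (Bm f); rewrite -/chi {1}hchi rmorphD rmorphM /= horner_mx_C horner_mx_X.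
have comm : Bm f * horner_mx (Bm f) Q = horner_mx (Bm f) Q * Bm f.
  by have := congr1 (horner_mx (Bm f)) (mulrC (polyX R) Q); rewrite !rmorphM /= horner_mx_X.
pose Binv := (- s) *: horner_mx (Bm f) Q.
have hQB : horner_mx (Bm f) Q * Bm f = - (chi`_0)%:M.
  by apply/eqP; rewrite -addr_eq0 addrC CH.
have BiB : Binv *m Bm f = 1%:M.
  by rewrite /Binv -scalemxAl mulmxE hQB scalerN scaleNr opprK scale_scalar_mx mulrC hs.
have BBi : Bm f *m Binv = 1%:M.
  by rewrite /Binv -scalemxAr mulmxE comm hQB scalerN scaleNr opprK scale_scalar_mx mulrC hs.
pose g (m : M) := pi (Binv *m col3 m).
have g_pi : forall v, g (pi v) = pi (Binv *m v).
  move=> v; rewrite /g.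
  have piN : forall u, pi (- u) = - pi u by move=> u; rewrite -[- u]scaleN1r piZ scaleN1r.
  have hk : pi (col3 (pi v) - v) = 0 by rewrite piD piN pi_col3 subrr.
  apply/eqP; rewrite -subr_eq0 -piN -piD -mulmxN -mulmxDr /Binv -scalemxAl piZ.
  by rewrite ker_pres // scaler0.
exists g; split; last split.
- move=> r u v; rewrite -{1}(pi_col3 u) -{1}(pi_col3 v) -piZ -piD g_pi.
  by rewrite mulmxDr -scalemxAr piD piZ.
- by move=> m; rewrite /g Bm_spec // mulmxA BBi mul1mx pi_col3.
- by move=> m; rewrite -{1}(pi_col3 m) Bm_spec // g_pi mulmxA BiB mul1mx pi_col3.
Qed.

Lemma g1_neq0 : g1 <> 0.
Proof.
rewrite g1E => /cb0 [h _]; move: h; rewrite mulr1 mulr0 addr0 => hx0.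
by have := hx 3; rewrite hx0 phi0 eqxx => /eqP; rewrite eq_sym oner_eq0.
Qed.

Lemma localE : local_End M.
Proof.
split; first by move=> h; apply: g1_neq0; apply: h.
move=> f g hf hg nf ng hu.
have ef : eps f = 0 by case: (eqVneq (eps f) 0) => // h; case: (nf (eps_unit hf h)).
have eg : eps g = 0 by case: (eqVneq (eps g) 0) => // h; case: (ng (eps_unit hg h)).
by have := unit_eps (endo_add hf hg) hu; rewrite eps_add ef eg addr0 eqxx.
Qed.

Lemma indecM : indecomposable M.
Proof.
split; first by exists g1; exact: g1_neq0.
move=> N1 N2 [h10 h1] [h20 h2] hdec hint.
have N1D u v : N1 u -> N1 v -> N1 (u + v) by move=> hu hv; rewrite -(scale1r u); exact: h1.
have N2D u v : N2 u -> N2 v -> N2 (u + v) by move=> hu hv; rewrite -(scale1r u); exact: h2.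
have N1N u : N1 u -> N1 (- u) by move=> hu; rewrite -scaleN1r -(addr0 (_ *: u)); exact: h1.
have N2N u : N2 u -> N2 (- u) by move=> hu; rewrite -scaleN1r -(addr0 (_ *: u)); exact: h2.
have N1Z r u : N1 u -> N1 (r *: u) by move=> hu; rewrite -(addr0 (_ *: u)); exact: h1.
have N2Z r u : N2 u -> N2 (r *: u) by move=> hu; rewrite -(addr0 (_ *: u)); exact: h2.
have hd m : exists a, N1 a /\ N2 (m - a).
  by have [a [b [ha [hb ->]]]] := hdec m; exists a; split => //; rewrite addrC addKr.
pose p1 m := proj1_sig (constructive_indefinite_description _ (hd m)).
have hp1 m : N1 (p1 m) /\ N2 (m - p1 m).
  by rewrite /p1; case: constructive_indefinite_description.
have uniq m a b : N1 a -> N2 b -> m = a + b -> p1 m = a.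
  move=> ha hb hm; have [h1m h2m] := hp1 m.
  apply/eqP; rewrite -subr_eq0; apply/eqP; apply: hint; first by apply: N1D => //; exact: N1N.
  have -> : p1 m - a = b - (m - p1 m) by rewrite hm opprB addrC [RHS]addrCA opprD [b + _]addrCA subrr addr0 addrC.
  by apply: N2D => //; exact: N2N.
have ep1 : endo p1.
  move=> r u v; apply: (uniq _ _ (r *: (u - p1 u) + (v - p1 v))).
  - by apply: N1D; [apply: N1Z; case: (hp1 u) | case: (hp1 v)].
  - by apply: N2D; [apply: N2Z; case: (hp1 u) | case: (hp1 v)].
  - by rewrite scalerBr addrACA [r *: p1 u + _]addrC [p1 v + _]addrC !subrK.
case: (eqVneq (eps p1) 0) => he.
  have ep2 : endo (fun m => m + - p1 m).
    apply: endo_add => //; move=> r u v; rewrite ep1 opprD scalerN //.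
  have : eps (fun m => m + - p1 m) != 0.
    rewrite eps_add; have -> : eps (fun m => - p1 m) = - eps p1 by rewrite /eps /= -[- p1 g3]scaleN1r; case: (kZ (-1) (p1 g3)) => _ _ ->; rewrite phiN phi_one mulN1r.
    by rewrite he oppr0 addr0 (eps_id : eps (fun m => m) = 1) oner_eq0.
  move/(eps_unit ep2) => [g [hg [_ gf]]]; left => m hm.
  have : m + - p1 m = 0 by rewrite (uniq m m 0) // ?subrr // addr0.
  by move=> h0; rewrite -(gf m) h0 (endo0 hg).
move/(eps_unit ep1): he => [g [hg [_ gf]]]; right => m hm.
have : p1 m = 0 by rewrite (uniq m 0 m) // add0r.
by move=> h0; rewrite -(gf m) h0 (endo0 hg).
Qed.

Definition form (a b c a' b' c' : R) :=
  x * (a * c' + c * a') + y * (b * c' + c * b' - a * a') + x * (x * (b * b')).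

Lemma rel0_comb a b c e u1 u2 h1 h2 h3 : rel0 a b c ->
  e = u1 * (x * a + y * b) + u2 * (z * b + x * c) + (y*y - x*z)*h1 + (x*(x*x) - y*z)*h2 + (x*(x*y) - z*z)*h3 ->
  e = 0.
Proof. by move=> [E1 E2] ->; rewrite E1 E2 rel_yy rel_xxx rel_xxy !subrr !mulr0 !mul0r !addr0. Qed.

Lemma form_ker a b c a' b' c' : rel0 a b c -> form a b c a' b' c' = 0.
Proof.
move=> hr.
have q1 : - (y * a) + x * c = 0.
  apply: nzdx; apply: (@rel0_comb a b c _ (- y) x b 0 0 hr); ring.
have q2 : x * (x * b) + y * c = 0.
  apply: nzdx; apply: (@rel0_comb a b c _ 0 y 0 b 0 hr); ring.
have q3 : x * a + y * b = 0 by case: hr.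
transitivity (a' * (- (y * a) + x * c) + b' * (x * (x * b) + y * c) + c' * (x * a + y * b)).
  by rewrite /form; ring.
by rewrite q1 q2 q3 !mulr0 !addr0.
Qed.

Lemma form_sym a b c a' b' c' : form a b c a' b' c' = form a' b' c' a b c.
Proof. by rewrite /form; ring. Qed.

Definition alpha (m m' : M) := form (lA m) (lB m) (lC m) (lA m') (lB m') (lC m').

Lemma alpha_cb a b c a' b' c' : alpha (cb a b c) (cb a' b' c') = form a b c a' b' c'.
Proof.
rewrite /alpha; set A := lA _; set B := lB _; set C := lC _; set A' := lA _; set B' := lB _; set C' := lC _.
have h := lift_cb a b c; have h' := lift_cb a' b' c'.
rewrite -/A -/B -/C in h; rewrite -/A' -/B' -/C' in h'.
apply/eqP; rewrite -subr_eq0; apply/eqP.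
transitivity (form (A - a) (B - b) (C - c) A' B' C' + form (A' - a') (B' - b') (C' - c') a b c).
  by rewrite /form; ring.
by rewrite !form_ker // addr0.
Qed.

Lemma alpha_sym m m' : alpha m m' = alpha m' m.
Proof. exact: form_sym. Qed.

Lemma alphaE m m' : alpha m m' = form (lA m) (lB m) (lC m) (lA m') (lB m') (lC m').
Proof. by []. Qed.

Lemma alpha_lin2 m r u v : alpha m (r *: u + v) = r * alpha m u + alpha m v.
Proof.
rewrite (liftE m) (liftE u) (liftE v) cbZ cbD !alpha_cb /form; ring.
Qed.
Lemma alpha_lin1 r u v m : alpha (r *: u + v) m = r * alpha u m + alpha v m.
Proof. by rewrite !(alpha_sym _ m) alpha_lin2. Qed.

Lemma alpha_I m m' : ideal2 x y (alpha m m').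
Proof.
rewrite alphaE /form; set a := lA m; set b := lB m; set c := lC m; set a' := lA m'; set b' := lB m'; set c' := lC m'.
exists (a * c' + c * a' + x * (b * b')), (b * c' + c * b' - a * a'); ring.
Qed.

Lemma alpha_inj m m' : (forall u, alpha m u = alpha m' u) -> m = m'.
Proof.
move=> h; rewrite (liftE m) (liftE m'); apply/cb_eq.
have h1 := h g1; have h2 := h g2; have h3 := h g3.
rewrite (liftE m) (liftE m') g1E g2E g3E !alpha_cb in h1 h2 h3.
set a := lA m - lA m'; set b := lB m - lB m'; set c := lC m - lC m'.
have q2 : y * c + x * (x * b) = 0.
  transitivity (form (lA m) (lB m) (lC m) 0 1 0 - form (lA m') (lB m') (lC m') 0 1 0).
    by rewrite /a /b /c /form; ring.
  by rewrite h2 subrr.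
have q3 : x * a + y * b = 0.
  transitivity (form (lA m) (lB m) (lC m) 0 0 1 - form (lA m') (lB m') (lC m') 0 0 1).
    by rewrite /a /b /c /form; ring.
  by rewrite h3 subrr.
split => //; apply: nzdy.
transitivity (x * (y * c + x * (x * b)) - (x * (x * x) - y * z) * b); first by ring.
by rewrite q2 rel_xxx subrr mul0r mulr0 subrr.
Qed.

Lemma alpha_surj (g : M -> R) : hom_into (ideal2 x y) g -> exists m, forall u, g u = alpha m u.
Proof.
move=> [hl hI].
have g0 : g 0 = 0.
  by have := hl 1 0 0; rewrite scale1r addr0 mul1r => h; apply: (addrI (g 0)); rewrite -h addr0.
have gD u v : g (u + v) = g u + g v by have := hl 1 u v; rewrite scale1r mul1r.
have gZ r u : g (r *: u) = r * g u by rewrite -(addr0 (r *: u)) hl g0 addr0.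
have gcb a b c : g (cb a b c) = a * g g1 + b * g g2 + c * g g3 by rewrite /S3.cb !gD !gZ.
have [p1 [p2 e1]] := hI g1; have [q1 [q2 e2]] := hI g2; have [s1 [s2 e3]] := hI g3.
have hrel := congr1 g rel1; rewrite gcb g0 e1 e2 e3 in hrel.
have h8 : phi p2 0 + phi s1 0 = 0.
  have := congr1 (phi^~ 8%N) hrel.
  rewrite ![_ * x]mulrC ![_ * y]mulrC /= !(mulrDr, mulNr, phi_add, phiN, phi0, phXS, phYS, phZS) ?phXs ?phYs ?phZs //.
  by rewrite ?phi1 ?phi2 ?oppr0 !(add0r, addr0, subr0, sub0r) addrC.
pose v1 := cst (phi s2 0).
have hs2 : phi (s2 - v1) 0 = 0 by rewrite phiB /v1 cstE subrr.
have [b1 [b2 [b3 hb]]] := mdec hs2.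
have hsp : phi (s1 + p2) 0 = 0 by rewrite phi_add addrC h8.
have [c1 [c2 [c3 hc]]] := mdec hsp.
pose v0 := s1 + y * b1 + z * b2 + x * (x * b3).
pose v2 := p1 + (y * c1 + z * c2 + x * (x * c3)) + (z * b1 + x * (x * b2) + x * (y * b3)).
have es2 : s2 = v1 + (x * b1 + y * b2 + z * b3) by rewrite -hb addrC subrK.
have ep2 : p2 = x * c1 + y * c2 + z * c3 - s1 by rewrite -hc addrC addKr.
have r3 : x * v0 + y * v1 = g g3.
  rewrite e3 es2; apply: (@by_rels _ _ (- b2) b3 0); rewrite /v0; ring.
have r1 : - (y * v0) + x * v2 = g g1.
  rewrite e1 ep2; apply: (@by_rels _ _ (- (b1 + c2)) (b2 + c3) 0); rewrite /v0 /v2; ring.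
have r2 : y * v2 + x * (x * v1) = g g2.
  apply/eqP; rewrite -subr_eq0; apply/eqP; apply: nzdx.
  have hx2 : x * g g2 = y * g g1 + z * g g3.
    by apply/eqP; rewrite -subr_eq0 -oppr_eq0; apply/eqP; rewrite -hrel e1 e2 e3; ring.
  rewrite mulrBr hx2 -r1 -r3; apply: (@by_rels _ _ v0 v1 0); ring.
exists (cb v0 v1 v2) => u.
rewrite {1}(liftE u) gcb -r1 -r2 -r3.
rewrite [alpha _ u](_ : _ = alpha (cb v0 v1 v2) (cb (lA u) (lB u) (lC u))); last by rewrite -liftE.
rewrite alpha_cb /form; ring.
Qed.

Local Notation st := (star alpha).

Lemma alpha_add2 m u v : alpha m (u + v) = alpha m u + alpha m v.
Proof. by have := alpha_lin2 m 1 u v; rewrite scale1r mul1r. Qed.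
Lemma alpha_add1 u v m : alpha (u + v) m = alpha u m + alpha v m.
Proof. by rewrite !(alpha_sym _ m) alpha_add2. Qed.
Lemma alpha_01 m : alpha 0 m = 0.
Proof. by have := alpha_add1 0 0 m; rewrite addr0 => h; apply: (addrI (alpha 0 m)); rewrite -h addr0. Qed.
Lemma alpha_Z1 r u m : alpha (r *: u) m = r * alpha u m.
Proof. by have := alpha_lin1 r u 0 m; rewrite addr0 alpha_01 addr0. Qed.
Lemma alpha_Z2 r u m : alpha m (r *: u) = r * alpha m u.
Proof. by rewrite !(alpha_sym m) alpha_Z1. Qed.
Lemma alpha_02 m : alpha m 0 = 0.
Proof. by rewrite alpha_sym alpha_01. Qed.

Lemma star_spec f m : endo f -> forall u, alpha (st f m) u = alpha m (f u).
Proof.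
move=> hf.
have [m' hm'] : exists m', forall u, alpha m (f u) = alpha m' u.
  apply: alpha_surj; split; last by move=> u; exact: alpha_I.
  by move=> r u v; rewrite hf alpha_lin2.
rewrite /star; apply: (epsilon_spec (inhabits 0) (fun x' => forall u, alpha x' u = alpha m (f u))).
by exists m' => u; rewrite hm'.
Qed.

Lemma ssd : strongly_self_dual (ideal2 x y) alpha.
Proof.
split; first by move=> m; split; [move=> r u v; exact: alpha_lin2 | move=> u; exact: alpha_I].
split; first by move=> r u v w; exact: alpha_lin1.
split; first by move=> m m' h; exact: alpha_inj.
split; first exact: alpha_surj.
exact: alpha_sym.
Qed.

Lemma rstar : Rstar_structure alpha.
Proof.
split.
  move=> f hf r u v; apply: alpha_inj => w.
  by rewrite star_spec // alpha_lin1 alpha_lin1 !star_spec.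
split.
  move=> f g hf hg m; apply: alpha_inj => w.
  rewrite star_spec; last exact: endo_add.
  by rewrite alpha_add1 !star_spec // alpha_add2.
split.
  move=> f g hf hg m; apply: alpha_inj => w.
  rewrite star_spec; last exact: endo_comp.
  by rewrite !star_spec.
split.
  by move=> m; apply: alpha_inj => w; rewrite star_spec.
split.
  move=> r f hf m; apply: alpha_inj => w.
  rewrite star_spec; last exact: endo_scale.
  by rewrite alpha_Z1 alpha_Z2 star_spec.
move=> f hf m; apply: alpha_inj => w.
have hsf : endo (st f).
  move=> r u v; apply: alpha_inj => w'.
  by rewrite star_spec // alpha_lin1 alpha_lin1 !star_spec.
by rewrite star_spec // alpha_sym star_spec // alpha_sym.
Qed.

Lemma riso : right_E_iso alpha.
Proof. by move=> f hf m u; rewrite star_spec. Qed.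


Lemma rel0_ext a b c a' b' c' : a = a' -> b = b' -> c = c' -> rel0 a b c -> rel0 a' b' c'.
Proof. by move=> -> -> ->. Qed.

Lemma lift_lin r u v : rel0 (lA (r *: u + v) - (r * lA u + lA v)) (lB (r *: u + v) - (r * lB u + lB v))
  (lC (r *: u + v) - (r * lC u + lC v)).
Proof. by apply/cb_eq; rewrite -liftE -cbD -cbZ -!liftE. Qed.

Lemma T1ker a b c : rel0 a b c -> rel0 c (- a) (- (x * b)).
Proof.
move=> hr; split; apply: nzdx.
  by apply: (@rel0_comb a b c _ (- y) x b 0 0 hr); ring.
by apply: (@rel0_comb a b c _ (- z) 0 0 (- b) 0 hr); ring.
Qed.

Lemma TGker a b c : rel0 a b c -> rel0 (x * b) c (y * b).
Proof.
move=> hr; split; apply: nzdx.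
  by apply: (@rel0_comb a b c _ 0 y 0 b 0 hr); ring.
by apply: (@rel0_comb a b c _ 0 z 0 0 b hr); ring.
Qed.

Definition F1 (m : M) := cb (lC m) (- lA m) (- (x * lB m)).
Definition FG (m : M) := cb (x * lB m) (lC m) (y * lB m).

Lemma F1_cb a b c : F1 (cb a b c) = cb c (- a) (- (x * b)).
Proof.
apply/cb_eq; apply: (rel0_ext _ _ _ (T1ker (lift_cb a b c))); ring.
Qed.
Lemma FG_cb a b c : FG (cb a b c) = cb (x * b) c (y * b).
Proof.
apply/cb_eq; apply: (rel0_ext _ _ _ (TGker (lift_cb a b c))); ring.
Qed.

Lemma endo_F1 : endo F1.
Proof.
move=> r u v; rewrite {2}(liftE u) {2}(liftE v) !F1_cb cbZ cbD.
apply/cb_eq; apply: (rel0_ext _ _ _ (T1ker (lift_lin r u v))); ring.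
Qed.
Lemma endo_FG : endo FG.
Proof.
move=> r u v; rewrite {2}(liftE u) {2}(liftE v) !FG_cb cbZ cbD.
apply/cb_eq; apply: (rel0_ext _ _ _ (TGker (lift_lin r u v))); ring.
Qed.

Lemma cyclicM : cyclic_over_End M.
Proof.
exists g3 => m; have [a [b [c ->]]] := cb_surj m.
exists (fun n => a *: F1 n + (b *: FG n + c *: n)); split.
  apply: endo_add; first exact: endo_scale endo_F1.
  apply: endo_add; first exact: endo_scale endo_FG.
  exact: endo_scale endo_id.
rewrite g3E F1_cb FG_cb !mulr0 oppr0.
by rewrite -g1E -g2E -g3E addrA.
Qed.


Lemma kC0 : kC 0 = 0.
Proof. by rewrite (_ : 0 = cb 0 0 0) ?kCcb ?phi0 // /S3.cb !scale0r !addr0. Qed.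

Lemma phi3_form a b c a' b' c' : phi (form a b c a' b' c') 3 = phi a 0 * phi c' 0 + phi c 0 * phi a' 0.
Proof.
rewrite /form !phi_add phXS phYs // phXS phXs // addr0 addr0.
by rewrite phi_add !phi_mul0.
Qed.

Lemma kC_alpha m : kC m = phi (alpha m g1) 3.
Proof.
rewrite {1}(liftE m) kCcb g1E [alpha m _](_ : _ = alpha (cb (lA m) (lB m) (lC m)) (cb 1 0 0)); last by rewrite -liftE.
by rewrite alpha_cb phi3_form phi0 phi_one mulr0 add0r mulr1.
Qed.

Lemma kC_star f a : endo f -> kC (st f a) = eps f * kC a.
Proof.
move=> hf; rewrite kC_alpha star_spec //.
rewrite [alpha a _](_ : _ = alpha (cb (lA a) (lB a) (lC a)) (cb (lA (f g1)) (lB (f g1)) (lC (f g1)))); last by rewrite -!liftE.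
rewrite alpha_cb phi3_form; case: (endo_consts hf) => h1 _ _ _ h5.
by move: h1 h5; rewrite /kC /kA /eps => -> ->; rewrite mulr0 add0r mulrC.
Qed.

Definition PhiT (s : seq (M * M)) : k := \sum_(p <- s) kC p.1 * kC p.2.

Lemma PhiT_inv s t : tequiv alpha s t -> PhiT s = PhiT t.
Proof.
elim => {s t} //.
- by move=> s t u _ -> _ ->.
- by move=> s1 s2 t1 t2 _ h1 _ h2; rewrite /PhiT !big_cat /= -/(PhiT s1) -/(PhiT s2) h1 h2.
- by move=> s t; rewrite /PhiT !big_cat /= addrC.
- by move=> m; rewrite /PhiT big_seq1 big_nil /= kC0 mul0r.
- by move=> a a' m; rewrite /PhiT big_seq1 !big_cons big_nil /=; case: (kD a a') => _ _ ->; rewrite mulrDl addr0.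
- by move=> a m m'; rewrite /PhiT big_seq1 !big_cons big_nil /=; case: (kD m m') => _ _ ->; rewrite mulrDr addr0.
- move=> f a m hf; rewrite /PhiT !big_seq1 /= kC_star // kC_endo //.
  by rewrite mulrCA mulrA.
Qed.

Lemma torsionT : tensor_has_nonzero_torsion alpha.
Proof.
exists [:: (g3, g3)], x; split; first by move=> s; exact: nzdx.
split; last first.
  move/PhiT_inv; rewrite /PhiT big_seq1 big_nil /= g3E kCcb phi_one mulr1 => /eqP.
  by rewrite oner_eq0.
rewrite /tscale /=.
have hfx : endo (fun m : M => x *: m) by exact: endo_scale endo_id.
have sx : st (fun m => x *: m) g3 = x *: g3.
  by apply: alpha_inj => w; rewrite star_spec // alpha_Z1 alpha_Z2.
pose h (m : M) := cb 0 0 (x * lA m + y * lB m).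
have hh : endo h.
  move=> r u v; rewrite /h cbZ cbD; apply/cb_eq; have [E1 _] := lift_lin r u v.
  rewrite !mulr0 !addr0 !subrr; split; first by ring.
  rewrite mulr0 add0r -[RHS](mulr0 x); congr (_ * _); rewrite -E1; ring.
have hg3 : h g3 = 0.
  rewrite /h g3E; have [E1 _] := lift_cb 0 0 1; move: E1; rewrite !subr0 => ->.
  by rewrite /S3.cb !scale0r !addr0.
have sh : st h g1 = x *: g3.
  apply: alpha_inj => w; rewrite star_spec // alpha_Z1 /h g1E g3E.
  rewrite [alpha _ w](_ : _ = alpha (cb 0 0 1) (cb (lA w) (lB w) (lC w))); last by rewrite -liftE.
  by rewrite !alpha_cb /form; ring.
have h0 : endo (fun _ : M => (0 : M)) by move=> r u v; rewrite scaler0 addr0.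
have s0 : st (fun _ => 0) g1 = 0.
  by apply: alpha_inj => w; rewrite star_spec // alpha_01 alpha_02.
apply: (@te_trans _ _ _ _ [:: (x *: g3, g3)]).
  by apply: te_sym; rewrite -{1}sx; exact: (te_bal alpha g3 g3 hfx).
apply: (@te_trans _ _ _ _ [:: (g1, (0 : M))]).
  by rewrite -{1}sh -hg3; exact: (te_bal alpha g1 g3 hh).
apply: (@te_trans _ _ _ _ [:: ((0 : M), g3)]); last exact: te_zero.
by apply: te_sym; rewrite -{1}s0; exact: (te_bal alpha g1 g3 h0).
Qed.

Lemma all_claims : torsion_free M /\ indecomposable M /\ has_rank M 2 /\ min_gens M 3 /\
  local_End M /\ cyclic_over_End M /\
  exists alpha : M -> M -> R,
    strongly_self_dual (ideal2 x y) alpha /\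
    Rstar_structure alpha /\ right_E_iso alpha /\
    tensor_has_nonzero_torsion alpha.
Proof.
split; first exact: tf.
split; first exact: indecM.
split; first exact: rank2.
split; first exact: mingens3.
split; first exact: localE.
split; first exact: cyclicM.
exists alpha; split; first exact: ssd.
split; first exact: rstar.
split; first exact: riso.
exact: torsionT.
Qed.

End Main.

End S4.
Import S4.

Theorem mainTheorem8 (k : fieldType) (R : comNzRingType) (phi : R -> nat -> k)
  (phi_add : forall a b n, phi (a + b) n = phi a n + phi b n)
  (phi_one : forall n, phi 1 n = (n == 0%N)%:R)
  (phi_mul : forall a b n,
     phi (a * b) n = \sum_(i < n.+1) phi a i * phi b (n - i)%N)
  (phi_inj : forall a b, (forall n, phi a n = phi b n) -> a = b)
  (phi_im : forall f : nat -> k,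
     (exists a, forall n, phi a n = f n) <-> (f 1%N = 0 /\ f 2%N = 0))
  (x y z : R)
  (hx : forall n, phi x n = (n == 3%N)%:R)
  (hy : forall n, phi y n = (n == 4%N)%:R)
  (hz : forall n, phi z n = (n == 5%N)%:R)
  (M : lmodType R) (pi : 'cV[R]_3 -> M)
  (pi_lin : Rlinear pi)
  (pi_surj : forall m : M, exists v, pi v = m)
  (pi_ker : forall v, pi v = 0 <-> exists u, v = Amat x y z *m u) :
  torsion_free M /\ indecomposable M /\ has_rank M 2 /\ min_gens M 3 /\
  local_End M /\ cyclic_over_End M /\
  exists alpha : M -> M -> R,
    strongly_self_dual (ideal2 x y) alpha /\
    Rstar_structure alpha /\ right_E_iso alpha /\
    tensor_has_nonzero_torsion alpha.
Proof. by apply: all_claims. Qed.
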